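(* Encode Tower of Hanoi configurations with $n$ disks on pegs $0,1,2$ by words $x_1\dots x_n\in\{0,1,2\}^n$ (disk $j$, the $j$-th smallest, on peg $x_j$). Let $\Gamma_n$ be the graph on $\{0,1,2\}^n$ with $u\sim v$ iff $v=a_{xy}(u)\ne u$ for some $0\le x<y\le2$, where $a_{xy}$ changes the first occurrence in $u$ of $x$ or $y$ into the other symbol. For distinct $x,y$ let the unique shortest path from $x^n$ to $y^n$ in $\Gamma_n$ be called the geodesic from $x^n$ to $y^n$. Define the partial inverse transducer with states $q_{xy}^{-1}$ for ordered pairs of distinct $x,y\in\{0,1,2\}$ (with $z$ the third element): from state $q_{xy}^{-1}$, reading the letter $x$ outputs $0$ and moves to $q_{xz}^{-1}$, reading $y$ outputs $1$ and moves to $q_{zy}^{-1}$, and reading $z$ is undefined (the computation stops). Then for all $n\ge1$, distinct $x,y$, and every ternary word $u$ of length $n$: starting at $q_{xy}^{-1}$, the word $u$ is read entirely if and only if $u^R$ is a configuration on the geodesic from $x^n$ to $y^n$; and in that case, if $u^R$ is at distance $i$ from $x^n$ along this geodesic, the output produced is $[i]_2^R$, where $[i]_2$ is the length-$n$ binary representation of $i$ with least significant digit first (padded with zeros).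
   Context: $R$ denotes word reversal. *)

(* Defs.v *)
From mathcomp Require Import all_boot.
Set Implicit Arguments. Unset Strict Implicit. Unset Printing Implicit Defensive.

(* Pegs are 'I_3; a configuration with n disks is a word u : seq 'I_3 of size n,
   the j-th letter (0-based index j-1) being the peg of the j-th smallest disk. *)
Definition peg := 'I_3.
Definition word := seq peg.

Fixpoint a_op (x y : peg) (u : word) : word :=
  match u with
  | [::] => [::]
  | c :: u' => if c == x then y :: u'
               else if c == y then x :: u'
               else c :: a_op x y u'
  end.

Definition hanoi_adj (u v : word) : bool :=
  [exists x : peg, exists y : peg, [&& (x < y)%N, v == a_op x y u & v != u]].

Definition cst (n : nat) (x : peg) : word := nseq n x.

Definition vert (n : nat) (u : word) : bool := size u == n.

Definition gpath (n : nat) (s t : word) (p : seq word) : Prop :=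
  [/\ all (vert n) p, ohead p = Some s, last s p = t & path hanoi_adj s (behead p)].

Definition geodesic (n : nat) (x y : peg) (p : seq word) : Prop :=
  gpath n (cst n x) (cst n y) p /\
  forall q, gpath n (cst n x) (cst n y) q -> (size p <= size q)%N.

Definition third (x y : peg) : peg := inord (3 - x - y).

(* the partial inverse transducer: state q^{-1}_{xy} encoded by (x,y);
   output digits are 0/1 as nat; None = computation stops (undefined). *)
Fixpoint inv_trans (x y : peg) (u : word) : option (seq nat) :=
  match u with
  | [::] => Some [::]
  | c :: u' =>
      if c == x then omap (cons 0) (inv_trans x (third x y) u')
      else if c == y then omap (cons 1) (inv_trans (third x y) y u')
      else None
  end.

Definition binrep (n i : nat) : seq nat := mkseq (fun j => (i %/ 2 ^ j) %% 2) n.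

(* Main.v *)
Require Import Defs.
From mathcomp Require Import all_boot zify.
Lemma third_val (x y : peg) : x != y -> nat_of_ord (third x y) = 3 - x - y.
Proof.
move=> H; rewrite /third inordK //.
move: H; case: x => [x Hx]; case: y => [y Hy] /=.
rewrite -(inj_eq val_inj) /=; lia.
Qed.
Lemma third_uniq (x y c : peg) : x != y -> c != x -> c != y -> c = third x y.
Proof.
move=> H1 H2 H3; apply: val_inj; rewrite /= third_val //.
move: H1 H2 H3; case: x => [x Hx]; case: y => [y Hy]; case: c => [c Hc] /=.
rewrite -!(inj_eq val_inj) /=. lia.
Qed.
Lemma thirdC x y : third x y = third y x.
Proof. by rewrite /third -!subnDA addnC. Qed.
Lemma third_nex (x y : peg) : x != y -> third x y != x.
Proof.
move=> H; rewrite -(inj_eq val_inj) /= third_val //.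
move: H; case: x => [x Hx]; case: y => [y Hy] /=. rewrite -(inj_eq val_inj) /=. lia.
Qed.
Lemma third_ney (x y : peg) : x != y -> third x y != y.
Proof. by rewrite thirdC eq_sym => H; apply: third_nex. Qed.

Lemma a_op_notin x y u : x \notin u -> y \notin u -> a_op x y u = u.
Proof.
elim: u => //= c u IH; rewrite !in_cons !negb_or => /andP[hx hu] /andP[hy hu'].
by rewrite eq_sym (negbTE hx) eq_sym (negbTE hy) IH.
Qed.

Lemma a_op_rcons x y v l : a_op x y (rcons v l) =
  if (x \in v) || (y \in v) then rcons (a_op x y v) l
  else rcons v (if l == x then y else if l == y then x else l).
Proof.
elim: v => [|c v IH] /=.
  by case: ifP => //; case: ifP.
rewrite !in_cons IH.
case: (c =P x) => [->|hx] /=; first by rewrite eqxx.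
case: (c =P y) => [->|hy] /=; first by rewrite eqxx orbT.
have -> : (x == c) = false by apply/eqP=> e; apply: hx; rewrite e.
have -> : (y == c) = false by apply/eqP=> e; apply: hy; rewrite e.
by rewrite /=; case: ifP.
Qed.

Lemma a_opK x y u : a_op x y (a_op x y u) = u.
Proof.
elim: u => //= c u IH.
case: (c =P x) => [->|hx] /=.
  by case: (y =P x) => [->|_] /=; rewrite ?eqxx.
case: (c =P y) => [->|hy] /=.
  by rewrite eqxx.
by rewrite IH; move/eqP/negbTE: hx => ->; move/eqP/negbTE: hy => ->.
Qed.

Lemma a_opC x y u : a_op x y u = a_op y x u.
Proof.
elim: u => //= c u IH.
case: (c =P x) => [->|hx] /=.
  by case: (x =P y) => [->|_].
case: (c =P y) => [e|hy] //=; by rewrite IH.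
Qed.

Lemma hanoi_adj_sym u v : hanoi_adj u v -> hanoi_adj v u.
Proof.
case/existsP=> a /existsP [b /and3P [ab /eqP-> ne]].
apply/existsP; exists a; apply/existsP; exists b.
by rewrite ab a_opK eqxx eq_sym ne.
Qed.

Lemma hanoi_adjE x y u v : x != y -> v = a_op x y u -> v != u -> hanoi_adj u v.
Proof.
move=> xy ->  ne.
have [lt|] := ltnP x y.
  by apply/existsP; exists x; apply/existsP; exists y; rewrite lt eqxx ne.
rewrite leq_eqVlt => /orP[/eqP/val_inj e|lt]; first by rewrite e eqxx in xy.
by apply/existsP; exists y; apply/existsP; exists x; rewrite lt a_opC eqxx -a_opC ne.
Qed.

Lemma hanoi_adj_rcons u v l : hanoi_adj u v -> hanoi_adj (rcons u l) (rcons v l).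
Proof.
case/existsP=> a /existsP [b /and3P [ab /eqP-> ne]].
apply/existsP; exists a; apply/existsP; exists b.
rewrite ab a_op_rcons.
case: ifP => [_|/negbT]; first by rewrite eqxx eqseq_rcons negb_and ne.
by rewrite negb_or => /andP[h1 h2]; rewrite a_op_notin ?eqxx in ne.
Qed.

Lemma nseq_third n v x y : size v = n -> x \notin v -> y \notin v -> x != y ->
  v = nseq n (third x y).
Proof.
elim: v n => [|c v IH] [|n] //= [sz]; rewrite !in_cons !negb_or.
case/andP=> h1 h2 /andP[h3 h4] xy.
by rewrite -IH // -(@third_uniq _ _ c) // eq_sym.
Qed.

Definition wadj (u v : word) : bool := (u == v) || hanoi_adj u v.
Definition pre (w : word) : word := take (size w).-1 w.
Definition lst (w : word) : peg := nth ord0 w (size w).-1.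

Lemma wadj_sym u v : wadj u v -> wadj v u.
Proof. by case/orP=> [/eqP->|/hanoi_adj_sym h]; rewrite /wadj ?eqxx ?h ?orbT. Qed.

Lemma wadj_refl u : wadj u u.
Proof. by rewrite /wadj eqxx. Qed.

Lemma pre_rcons v l : pre (rcons v l) = v.
Proof. by rewrite /pre size_rcons /= -cats1 take_size_cat. Qed.

Lemma lst_rcons v l : lst (rcons v l) = l.
Proof. by rewrite /lst size_rcons /= nth_rcons ltnn eqxx. Qed.

Lemma w_rcons w : 0 < size w -> w = rcons (pre w) (lst w).
Proof.
move=> h; rewrite /pre /lst -take_nth ?prednK ?take_size //.
Qed.

Lemma size_pre w : size (pre w) = (size w).-1.
Proof. by rewrite /pre size_take; case: (size w) => //= k; rewrite ltnSn. Qed.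

Lemma step n w w' : size w = n.+1 -> size w' = n.+1 -> wadj w w' ->
  wadj (pre w) (pre w') /\ (lst w != lst w' -> pre w = nseq n (third (lst w) (lst w'))).
Proof.
move=> s1 s2.
have e1 : w = rcons (pre w) (lst w) by apply: w_rcons; rewrite s1.
have e2 : w' = rcons (pre w') (lst w') by apply: w_rcons; rewrite s2.
rewrite e1 e2.
have := size_pre w; have := size_pre w'; rewrite s1 s2 /=.
move: (pre w) (lst w) (pre w') (lst w') => v l v' l' sz' sz.
rewrite !pre_rcons !lst_rcons.
case/orP=> [|].
  by rewrite eqseq_rcons => /andP[/eqP-> /eqP->]; rewrite wadj_refl eqxx.
case/existsP=> a /existsP [b /and3P [ab /eqP E ne]].
have ab' : a != b by rewrite neq_ltn ab.
move: E ne; rewrite a_op_rcons; case: ifP => [_|/negbT].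
  move/eqP; rewrite eqseq_rcons => /andP[/eqP-> /eqP->] ne.
  split; last by rewrite eqxx.
  apply/orP; case: (a_op a b v =P v) => [->|h]; first by left.
  by right; apply: (@hanoi_adjE a b v (a_op a b v) ab' erefl); apply/eqP.
rewrite negb_or => /andP[ha hb] /eqP; rewrite eqseq_rcons => /andP[/eqP-> /eqP->] _.
split; first exact: wadj_refl.
rewrite (nseq_third _ _ _ _ sz ha hb ab').
case: (l =P a) => [->|la]; first by [].
case: (l =P b) => [->|lb]; first by rewrite thirdC.
by move=> H; rewrite eqxx in H.
Qed.

Fixpoint G (n : nat) (x y : peg) : seq word :=
  match n with
  | 0 => [:: [::]]
  | n'.+1 => map (rcons^~ x) (G n' x (third x y)) ++ map (rcons^~ y) (G n' (third x y) y)
  end.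

Lemma size_G n x y : size (G n x y) = 2 ^ n.
Proof.
elim: n x y => //= n IH x y.
by rewrite size_cat !size_map !IH expnS mul2n addnn.
Qed.

Lemma G_rev n x y : rev (G n x y) = G n y x.
Proof.
elim: n x y => //= n IH x y.
by rewrite rev_cat -!map_rev !IH thirdC.
Qed.

Lemma cst_rcons n x : cst n.+1 x = rcons (cst n x) x.
Proof. by rewrite /cst -cats1 -[n.+1]addn1 nseqD. Qed.

Lemma head_cat_ne {T : Type} (d : T) s t : 0 < size s -> head d (s ++ t) = head d s.
Proof. by case: s. Qed.
Lemma head_map_ne {T U : Type} (d : U) (d' : T) (f : T -> U) s : 0 < size s -> head d (map f s) = f (head d' s).
Proof. by case: s. Qed.
Lemma last_cat_ne {T : Type} (d : T) s t : 0 < size t -> last d (s ++ t) = last d t.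
Proof. by case: t => //= b t _; rewrite last_cat. Qed.
Lemma last_map_ne {T U : Type} (d : U) (d' : T) (f : T -> U) s : 0 < size s -> last d (map f s) = f (last d' s).
Proof. by case: s => //= a s _; rewrite last_map. Qed.

Lemma sorted_cat_ne {T : Type} (e : rel T) (d : T) s t : 0 < size s -> 0 < size t ->
  sorted e s -> sorted e t -> e (last d s) (head d t) -> sorted e (s ++ t).
Proof.
case: s => // a s; case: t => // b t _ _ /= h1 h2 h3.
by rewrite cat_path h1 /= h3 h2.
Qed.

Lemma G_props n x y : x != y ->
  [/\ head [::] (G n x y) = cst n x, last [::] (G n x y) = cst n y,
      all (vert n) (G n x y) & sorted hanoi_adj (G n x y)].
Proof.
elim: n x y => [|n IH] x y xy /=; first by [].
set z := third x y.
have zx : z != x by apply: third_nex.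
have zy : z != y by apply: third_ney.
have xz : x != z by rewrite eq_sym.
have [h1 l1 a1 s1] := IH x z xz.
have [h2 l2 a2 s2] := IH z y zy.
have p1 : 0 < size (G n x z) by rewrite size_G expn_gt0.
have p2 : 0 < size (G n z y) by rewrite size_G expn_gt0.
split.
- by rewrite head_cat_ne ?size_map // (head_map_ne _ [::]) // h1 -cst_rcons.
- by rewrite last_cat_ne ?size_map // (last_map_ne _ [::]) // l2 -cst_rcons.
- rewrite all_cat !all_map; apply/andP; split.
    by apply/allP=> w /(allP a1); rewrite /vert /= size_rcons.
  by apply/allP=> w /(allP a2); rewrite /vert /= size_rcons.
- apply: (sorted_cat_ne _ [::]); rewrite ?size_map //.
  + rewrite sorted_map; apply: sub_sorted s1 => u v h /=; exact: hanoi_adj_rcons.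
  + rewrite sorted_map; apply: sub_sorted s2 => u v h /=; exact: hanoi_adj_rcons.
  rewrite (last_map_ne _ [::]) // (head_map_ne _ [::]) // l1 h2.
  apply: (hanoi_adjE _ _ _ _ xy).
    rewrite a_op_rcons /cst !mem_nseq (eq_sym x) (negbTE zx) (eq_sym y) (negbTE zy).
    by rewrite !andbF /= eqxx.
  by rewrite eqseq_rcons eqxx /= eq_sym.
Qed.

Lemma binrepS n i : binrep n.+1 i = rcons (binrep n i) ((i %/ 2 ^ n) %% 2).
Proof. by rewrite /binrep mkseqS. Qed.

Lemma binrep_hi n i : 2 ^ n <= i -> binrep n i = binrep n (i - 2 ^ n).
Proof.
move=> h; rewrite /binrep /mkseq; apply/eq_in_map => j; rewrite mem_iota add0n => /= hj.
have E : i = (i - 2 ^ n) + 2 ^ (n - j).-1.+1 * 2 ^ j.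
  rewrite prednK ?subn_gt0 // -expnD subnK ?(ltnW hj) //.
  by rewrite subnK.
rewrite {1}E divnDMl ?expn_gt0 // expnS mulnC addnC modnMDl.
done.
Qed.

Lemma G_trans n x y i : x != y -> i < 2 ^ n ->
  inv_trans x y (rev (nth [::] (G n x y) i)) = Some (rev (binrep n i)).
Proof.
elim: n x y i => [|n IH] x y i xy /=.
  by rewrite expn0 ltnS leqn0 => /eqP->.
set z := third x y.
have zx : z != x by apply: third_nex.
have zy : z != y by apply: third_ney.
have xz : x != z by rewrite eq_sym.
move=> hi.
rewrite nth_cat size_map size_G binrepS rev_rcons.
case: ifP => hlt.
  rewrite (nth_map [::]) ?size_G // rev_rcons /= eqxx IH //=.
  by rewrite divn_small // mod0n.
rewrite (nth_map [::]) ?size_G; last by move: hi; rewrite expnS; lia.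
rewrite rev_rcons /= (negbTE (_ : y != x)) ?(eq_sym y) // eqxx IH //; last first.
  by move: hi hlt; rewrite expnS; lia.
have hge : 2 ^ n <= i by rewrite leqNgt hlt.
have -> : i %/ 2 ^ n = 1.
  have -> : i = (i - 2 ^ n) + 1 * 2 ^ n by rewrite mul1n subnK.
  rewrite divnDMl ?expn_gt0 // divn_small //.
  by move: hi; rewrite expnS; lia.
by rewrite (binrep_hi n i hge).
Qed.

Lemma all_take' {T : Type} (P : pred T) s k : all P s -> all P (take k s).
Proof. by rewrite -{1}(cat_take_drop k s) all_cat => /andP[]. Qed.

Lemma sorted_take' {T : Type} (e : rel T) s k : sorted e s -> sorted e (take k s).
Proof. case: s => //= a s; case: k => //= k; exact: take_path. Qed.

Lemma all_take_nth {T : Type} (P : pred T) (d : T) s k i :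
  all P (take k s) -> i < k -> i < size s -> P (nth d s i).
Proof.
move/(all_nthP d) => h ik hs; rewrite -(nth_take d ik); apply: h.
by rewrite size_take; case: ifP => // _; lia.
Qed.

Lemma head_take {T : Type} (d : T) s k : 0 < k -> head d (take k s) = head d s.
Proof. by case: s => // a s; case: k. Qed.

Lemma head_rev {T : Type} (d : T) s : head d (rev s) = last d s.
Proof. by case/lastP: s => // s a; rewrite rev_rcons last_rcons. Qed.

Lemma last_rev {T : Type} (d : T) s : last d (rev s) = head d s.
Proof. by case: s => // a s; rewrite rev_cons last_rcons. Qed.

Lemma proj_path n a S : all (vert n.+1) (a :: S) -> path wadj a S -> path wadj (pre a) (map pre S).
Proof.
elim: S a => //= b S IH a /and3P[va vb vS] /andP[ab pS].
have [h _] := step n a b (eqP va) (eqP vb) ab.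
by rewrite h IH // vb.
Qed.

Lemma proj_sorted n S : all (vert n.+1) S -> sorted wadj S -> sorted wadj (map pre S).
Proof. case: S => //= a S; exact: proj_path. Qed.

Lemma all_pre n S : all (vert n.+1) S -> all (vert n) (map pre S).
Proof.
rewrite all_map => /allP h; apply/allP => w /h.
by rewrite /vert /= size_pre => /eqP->.
Qed.

Lemma recon n l S : all (vert n.+1) S -> all (fun w => lst w == l) S ->
  S = map (rcons^~ l) (map pre S).
Proof.
elim: S => //= a S IH /andP[va vS] /andP[/eqP la lS].
by rewrite -IH // -la -w_rcons // (eqP va).
Qed.

Lemma FC n x W : sorted wadj W -> all (vert n.+1) W -> lst (head [::] W) = x ->
  lst (last [::] W) != x ->
  exists k, [/\ 0 < k < size W, all (fun w => lst w == x) (take k W),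
    lst (nth [::] W k) != x & pre (nth [::] W k.-1) = nseq n (third x (lst (nth [::] W k)))].
Proof.
case: W => [|a W'] srt al hd lt; first by rewrite /= hd eqxx in lt.
set P := (fun w : word => lst w != x).
have hP : has P (a :: W').
  by apply/hasP; exists (last a W'); [exact: mem_last | exact: lt].
exists (find P (a :: W')).
have k0 : 0 < find P (a :: W') by rewrite /= /P -hd /= eqxx.
have ks : find P (a :: W') < size (a :: W') by rewrite -has_find.
set k := find P (a :: W') in k0 ks *.
have bef : forall i, i < k -> lst (nth [::] (a :: W') i) = x.
  by move=> i hi; have := before_find [::] hi; rewrite /P => /negbFE/eqP.
split.
- by rewrite k0 ks.
- apply/(all_nthP [::]) => i; rewrite size_take ks => hi.
  by rewrite nth_take // bef.
- exact: (nth_find [::] hP).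
move/(all_nthP [::]): al => al.
move/(sortedP [::]): srt => srt.
have k1 : k.-1 < size (a :: W') by lia.
have sk : wadj (nth [::] (a :: W') k.-1) (nth [::] (a :: W') k).
  by have := srt k.-1; rewrite prednK // => /(_ ks).
have [_ H] := step n _ _ (eqP (al _ k1)) (eqP (al _ ks)) sk.
rewrite -{1}(bef k.-1) ?H //; last by lia.
rewrite bef; last by lia.
by rewrite eq_sym; exact: (nth_find [::] hP).
Qed.

Lemma mainL n : forall x y W, x != y -> 0 < size W -> sorted wadj W -> all (vert n) W ->
  head [::] W = cst n x -> last [::] W = cst n y ->
  2 ^ n <= size W /\ (size W = 2 ^ n -> W = G n x y).
Proof.
elim: n => [|n IH] x y W xy sz srt al hd ll.
  split; first by rewrite expn0.
  rewrite expn0; case: W sz srt al hd ll => [|w [|]] //= _ _.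
  by rewrite andbT /vert => /eqP/size0nil ->.
have hx : lst (head [::] W) = x by rewrite hd cst_rcons lst_rcons.
have hy : lst (last [::] W) = y by rewrite ll cst_rcons lst_rcons.
have yx : y != x by rewrite eq_sym.
have hyx : lst (last [::] W) != x by rewrite hy.
have [k [/andP[k0 kW] allx bk prek]] := FC n x W srt al hx hyx.
set b := lst (nth [::] W k) in bk prek.
set A := take k W.
have szA : size A = k by rewrite /A size_take kW.
have alA : all (vert n.+1) A by apply: all_take'.
have [lb1 eq1] : 2 ^ n <= size (map pre A) /\ (size (map pre A) = 2 ^ n -> map pre A = G n x (third x b)).
  apply: IH.
  - by rewrite eq_sym third_nex // eq_sym.
  - by rewrite size_map szA.
  - by apply: proj_sorted alA _; apply: sorted_take'.
  - exact: all_pre.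
  - by rewrite (head_map_ne _ [::]) ?szA // head_take // hd cst_rcons pre_rcons.
  - rewrite (last_map_ne _ [::]); last by rewrite szA.
    rewrite -nth_last szA /A nth_take; last by rewrite prednK.
    by rewrite prek.
rewrite size_map szA in lb1 eq1.
set W' := rev W.
have srt' : sorted wadj W'.
  by rewrite /W' rev_sorted; apply: sub_sorted srt => u v /wadj_sym.
have al' : all (vert n.+1) W' by rewrite /W' all_rev.
have hy' : lst (head [::] W') = y by rewrite /W' head_rev.
have hx'' : lst (last [::] W') != y by rewrite /W' last_rev hx eq_sym.
have [k' [/andP[k0' kW'] ally bk' prek']] := FC n y W' srt' al' hy' hx''.
set b' := lst (nth [::] W' k') in bk' prek'.
set A' := take k' W'.
have szW' : size W' = size W by rewrite /W' size_rev.
have szA' : size A' = k' by rewrite /A' size_take kW'.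
have alA' : all (vert n.+1) A' by apply: all_take'.
have [lb2 eq2] : 2 ^ n <= size (map pre A') /\ (size (map pre A') = 2 ^ n -> map pre A' = G n y (third y b')).
  apply: IH.
  - by rewrite eq_sym third_nex // eq_sym.
  - by rewrite size_map szA'.
  - by apply: proj_sorted alA' _; apply: sorted_take'.
  - exact: all_pre.
  - by rewrite (head_map_ne _ [::]) ?szA' // head_take // /W' head_rev ll cst_rcons pre_rcons.
  - rewrite (last_map_ne _ [::]); last by rewrite szA'.
    rewrite -nth_last szA' /A' nth_take; last by rewrite prednK.
    by rewrite prek'.
rewrite size_map szA' in lb2 eq2.
rewrite szW' in kW'.
have nthW' : forall i, i < size W -> nth [::] W' i = nth [::] W (size W - i.+1).
  by move=> i hi; rewrite /W' nth_rev.
have disj : k + k' <= size W.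
  rewrite leqNgt; apply/negP => hlt.
  have i1 : size W - k' < k by move: hlt kW'; clear; lia.
  have i2 : size W - k' < size W by move: k0' kW'; clear; lia.
  have e1 := all_take_nth _ [::] _ _ _ allx i1 i2.
  have j1 : k'.-1 < k' by move: k0'; clear; lia.
  have j2 : k'.-1 < size W' by rewrite szW'; move: kW'; clear; lia.
  have e2 := all_take_nth _ [::] _ _ _ ally j1 j2.
  rewrite nthW' /= in e2; last by move: j2; rewrite szW'.
  rewrite prednK // in e2.
  by move: xy; rewrite -(eqP e1) -(eqP e2) eqxx.
split; first by rewrite expnS; move: disj lb1 lb2; clear; lia.
rewrite expnS => hsz.
have ek : k = 2 ^ n by move: disj lb1 lb2 hsz; clear; lia.
have ek' : k' = 2 ^ n by move: disj lb1 lb2 hsz; clear; lia.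
have hb : b = y.
  have j1 : k'.-1 < k' by move: k0'; clear; lia.
  have j2 : k'.-1 < size W' by rewrite szW'; move: kW'; clear; lia.
  have e2 := all_take_nth _ [::] _ _ _ ally j1 j2.
  rewrite nthW' /= in e2; last by move: j2; rewrite szW'.
  rewrite prednK // in e2.
  have E : k = size W - k' by move: hsz ek ek'; clear; lia.
  by rewrite /b E; apply/eqP.
have hb' : b' = x.
  have j1 : k.-1 < k by move: k0; clear; lia.
  have j2 : k.-1 < size W by move: kW; clear; lia.
  have e1 := all_take_nth _ [::] _ _ _ allx j1 j2.
  rewrite /b' nthW' //.
  have -> : size W - k'.+1 = k.-1 by move: hsz ek ek'; clear; lia.
  exact/eqP.
rewrite hb in eq1; rewrite hb' in eq2.
have eq1' := eq1 ek; have eq2' := eq2 ek'.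
have hA := recon n x A alA allx.
have hA' := recon n y A' alA' ally.
have hD : drop k W = rev A'.
  rewrite /A' /W' take_rev revK.
  by congr drop; move: hsz ek ek'; clear; lia.
rewrite -(cat_take_drop k W) hD -/A hA hA' eq1' eq2' /=.
by rewrite -map_rev G_rev (thirdC y x).
Qed.

Lemma G_mem n : forall x y u out, x != y -> size u = n -> inv_trans x y u = Some out ->
  rev u \in G n x y.
Proof.
elim: n => [|n IH] x y u out xy.
  by case: u.
case: u => [|c u] //= [su].
have zx : third x y != x by apply: third_nex.
have zy : third x y != y by apply: third_ney.
have xz : x != third x y by rewrite eq_sym.
rewrite rev_cons mem_cat.
case: (c =P x) => [->|cx].
  case E: (inv_trans x (third x y) u) => [o|] //= _.
  by apply/orP; left; apply: map_f; apply: (IH _ _ _ o).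
case: (c =P y) => [->|cy] //.
case E: (inv_trans (third x y) y u) => [o|] //= _.
by apply/orP; right; apply: map_f; apply: (IH _ _ _ o).
Qed.

Theorem mainTheorem15 (n : nat) (x y : peg) (p : seq word) (u : word) :
  (0 < n)%N -> x != y -> geodesic n x y p -> size u = n ->
  ((exists out, inv_trans x y u = Some out) <-> rev u \in p) /\
  (forall i : nat, (i < size p)%N -> nth [::] p i = rev u ->
     inv_trans x y u = Some (rev (binrep n i))).
Proof.
move=> n0 xy [[alp hp lp pp] minp] su.
have [h1 l1 a1 s1] := G_props n x y xy.
have szG := size_G n x y.
have gG : gpath n (cst n x) (cst n y) (G n x y).
  case E: (G n x y) szG h1 l1 a1 s1 => [|g gs] szG h1 l1 a1 s1.
    by move: szG; rewrite /= => /eqP; rewrite eq_sym expn_eq0.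
  rewrite /= in h1 l1 s1; subst g.
  by split.
have hle := minp _ gG; rewrite szG in hle.
have ep : p = G n x y.
  case: p alp hp lp pp minp hle => [|a p'] //= alp [ea] lp pp minp hle.
  subst a.
  have sp : sorted wadj (cst n x :: p').
    by rewrite /=; apply: sub_path pp => a b h; rewrite /wadj h orbT.
  have [lb eqp] := mainL n x y (cst n x :: p') xy erefl sp alp erefl lp.
  by apply: eqp; apply/eqP; rewrite eqn_leq hle lb.
subst p.
split.
  split.
    by case=> out ho; apply: (G_mem n x y u out).
  move/(nthP [::]) => [i hi hi'].
  exists (rev (binrep n i)).
  by rewrite -[u]revK -hi' G_trans // -szG.
move=> i hi hi'.
by rewrite -[u]revK -hi' G_trans // -szG.
Qed.
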